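(* Let $R$ be a commutative ring with ${\rm char}(R)=3$, $G$ a group with involution $\varphi$, and assume $(RG)^-_\varphi$ is commutative. Let $g,h\in G\setminus G_\varphi$ be non-commuting elements satisfying one of the following conditions: (C3) $gh\in G_\varphi$, $hg=\varphi(g)h=g\varphi(h)$; (C4) $gh=h\varphi(g)=\varphi(g)\varphi(h)$ and $\varphi(h)g=\varphi(g)h$; (C5) $gh=\varphi(h)g=\varphi(g)\varphi(h)$ and $h\varphi(g)=g\varphi(h)$; (C6) $hg\in G_\varphi$, $gh=\varphi(h)g=h\varphi(g)$. Then $\langle g^{-1}\varphi(g)\rangle=\langle h^{-1}\varphi(h)\rangle=\langle (g,h)\rangle$ and $(g,h)^3=1$.
   Context: An involution on a group $G$ is a map $\varphi:G\to G$ with $\varphi(gh)=\varphi(h)\varphi(g)$ and $\varphi^2=\mathrm{id}$, extended $R$-linearly to $RG$. $G_\varphi=\{g\in G\mid\varphi(g)=g\}$; $(RG)^-_\varphi=\{\alpha\in RG\mid\varphi(\alpha)=-\alpha\}$. The group commutator is $(g,h)=ghg^{-1}h^{-1}$. *)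

(* Defs.v *)
From HB Require Import structures.
From mathcomp Require Import all_boot all_order all_algebra.
Set Implicit Arguments. Unset Strict Implicit. Unset Printing Implicit Defensive.
Import Order.TTheory GRing.Theory Num.Theory.
Local Open Scope ring_scope.

(* An arbitrary (possibly infinite) group, given by its carrier (an eqType,
   needed to compute coefficients of group-ring elements) and operations. *)
Definition group_axioms (G : eqType) (mul : G -> G -> G) (one : G) (inv : G -> G) : Prop :=
  [/\ (forall x y z, mul x (mul y z) = mul (mul x y) z),
      (forall x, mul one x = x), (forall x, mul x one = x),
      (forall x, mul (inv x) x = one) & (forall x, mul x (inv x) = one)].

Definition is_involution (G : eqType) (mul : G -> G -> G) (phi : G -> G) : Prop :=
  (forall g h, phi (mul g h) = mul (phi h) (phi g)) /\ (forall g, phi (phi g) = g).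

(* Group ring RG: an element is a finite formal sum, represented by a list of
   (coefficient, group element) pairs; two lists denote the same element of RG
   iff they have the same coefficient function. *)
Definition gr (R : comNzRingType) (G : eqType) := seq (R * G).

Definition gr_coeff (R : comNzRingType) (G : eqType) (a : gr R G) (x : G) : R :=
  \sum_(p <- a | p.2 == x) p.1.

Definition gr_mul (R : comNzRingType) (G : eqType) (mul : G -> G -> G)
  (a b : gr R G) : gr R G :=
  [seq (p.1 * q.1, mul p.2 q.2) | p <- a, q <- b].

Definition gr_inv (R : comNzRingType) (G : eqType) (phi : G -> G) (a : gr R G) : gr R G :=
  [seq (p.1, phi p.2) | p <- a].

Definition gr_skew (R : comNzRingType) (G : eqType) (phi : G -> G) (a : gr R G) : Prop :=
  forall x, gr_coeff (gr_inv phi a) x = - gr_coeff a x.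

Definition skew_commutative (R : comNzRingType) (G : eqType) (mul : G -> G -> G)
  (phi : G -> G) : Prop :=
  forall a b : gr R G, gr_skew phi a -> gr_skew phi b ->
    forall x, gr_coeff (gr_mul mul a b) x = gr_coeff (gr_mul mul b a) x.

Definition gpow (G : eqType) (mul : G -> G -> G) (one : G) (inv : G -> G)
  (x : G) (n : int) : G :=
  match n with
  | Posz k => iter k (mul x) one
  | Negz k => inv (iter k.+1 (mul x) one)
  end.

Definition in_cyc (G : eqType) (mul : G -> G -> G) (one : G) (inv : G -> G)
  (x y : G) : Prop := exists n : int, y = gpow mul one inv x n.

Definition same_cyc (G : eqType) (mul : G -> G -> G) (one : G) (inv : G -> G)
  (x y : G) : Prop := forall z, in_cyc mul one inv x z <-> in_cyc mul one inv y z.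

Definition gcomm (G : eqType) (mul : G -> G -> G) (inv : G -> G) (g h : G) : G :=
  mul g (mul h (mul (inv g) (inv h))).

(* Main.v *)
Require Import Defs.
From HB Require Import structures.
From mathcomp Require Import all_boot all_order all_algebra.
Import GRing.Theory.
Local Open Scope ring_scope.

Lemma nat_mod3 {R : comNzRingType} (Hchar : 3%N \in [pchar R]) (n m : nat) :
  n%:R = m%:R :> R -> (n == m %[mod 3])%N.
Proof.
move=> E; case: (leqP m n) => H.
  by rewrite eqn_mod_dvd // (dvdn_pcharf Hchar) natrB // E subrr.
have H' := ltnW H.
by rewrite eq_sym eqn_mod_dvd // (dvdn_pcharf Hchar) natrB // E subrr.
Qed.

Lemma m1_2 {R : comNzRingType} (Hchar : 3%N \in [pchar R]) : (-1 : R) = 2%:R.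
Proof.
have H3 : (3%:R : R) = 0 by apply/eqP; rewrite -(dvdn_pcharf Hchar).
by apply/eqP; rewrite eq_sym -subr_eq0 opprK natr1 H3.
Qed.

Lemma ifE (R : comNzRingType) (b : bool) (r s : R) :
  (if b then r + s else s) = (b : nat)%:R * r + s.
Proof. by case: b; rewrite ?mul1r ?mul0r ?add0r. Qed.

Lemma skew_eq (R : comNzRingType) (G : eqType)
  (mul : G -> G -> G) (phi : G -> G) (Hphi : forall g, phi (phi g) = g)
  (Hchar : 3%N \in [pchar R])
  (Hcomm : skew_commutative R mul phi) (x y z : G) :
  (((mul x y == z) +
   ((mul x (phi y) == z) * 2 +
    ((mul (phi x) y == z) * 2 + (mul (phi x) (phi y) == z) * (2 * 2))))
  == ((mul y x == z) +
   ((mul y (phi x) == z) * 2 +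
    ((mul (phi y) x == z) * 2 + (mul (phi y) (phi x) == z) * (2 * 2)))) %[mod 3])%N.
Proof.
have sk : forall u, gr_skew phi ([:: (1, u); (-1, phi u)] : gr R G).
  move=> u w; rewrite /gr_coeff /gr_inv /= !big_cons big_nil /= Hphi.
  case: (phi u == w); case: (u == w); rewrite ?addr0 ?oppr0 ?opprK ?opprD ?add0r //.
  by rewrite !subrr.
have := Hcomm _ _ (sk x) (sk y) z.
rewrite /gr_coeff /gr_mul /= !big_cons big_nil /= !ifE (m1_2 Hchar).
rewrite !mulr1 !mul1r !addr0 -!natrM -!natrD => E.
exact: (nat_mod3 Hchar _ _ E).
Qed.


Lemma grp_lemmas {G : eqType} {mul : G -> G -> G} {one : G} {inv : G -> G}
  (HG : group_axioms mul one inv) :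
  [/\ forall x y, mul (inv x) (mul x y) = y,
      forall x y, mul x (mul (inv x) y) = y,
      forall x y z, mul x y = mul x z -> y = z,
      forall x y z, mul y x = mul z x -> y = z &
      forall x y, mul x y = one -> y = inv x].
Proof.
case: HG => mA m1l m1r mVl mVr.
have K1 : forall x y, mul (inv x) (mul x y) = y by move=> x y; rewrite mA mVl m1l.
have K2 : forall x y, mul x (mul (inv x) y) = y by move=> x y; rewrite mA mVr m1l.
split => //.
- by move=> x y z E; rewrite -(K1 x y) E K1.
- move=> x y z E; have := congr1 (fun t => mul t (inv x)) E.
  by rewrite /= -!mA mVr !m1r.
- move=> x y E; have := congr1 (mul (inv x)) E.
  by rewrite K1 m1r.
Qed.

Lemma ext_r {G : eqType} {mul : G -> G -> G} {one : G} {inv : G -> G}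
  (HG : group_axioms mul one inv) {x y u v : G} :
  mul x y = mul u v -> forall r, mul x (mul y r) = mul u (mul v r).
Proof. by case: HG => mA _ _ _ _ E r; rewrite !mA E. Qed.

Lemma ext1 {G : eqType} {mul : G -> G -> G} {one : G} {inv : G -> G}
  (HG : group_axioms mul one inv) {x y w : G} :
  mul x y = w -> forall r, mul x (mul y r) = mul w r.
Proof. by case: HG => mA _ _ _ _ E r; rewrite mA E. Qed.

Lemma cyc3 {G : eqType} {mul : G -> G -> G} {one : G} {inv : G -> G}
  (HG : group_axioms mul one inv) {x : G} (H3 : mul x (mul x x) = one) (z : G) :
  in_cyc mul one inv x z <-> [\/ z = one, z = x | z = mul x x].
Proof.
have [K1 K2 CL CR IU] := grp_lemmas HG.
case: (HG) => mA m1l m1r mVl mVr.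
have P : forall k, [\/ iter k (mul x) one = one, iter k (mul x) one = x
                   | iter k (mul x) one = mul x x].
  elim=> [|k [] IH] /=; [by constructor | | |]; rewrite IH.
  - by apply: Or32; rewrite m1r.
  - by apply: Or33.
  - by apply: Or31.
split.
  case=> [[k|k]] ->; first exact: P.
  have -> : gpow mul one inv x (Negz k) = inv (iter k.+1 (mul x) one) by [].
  case: (P k.+1) => ->.
  - by constructor 1; apply/esym/IU; rewrite m1l.
  - by constructor 3; apply/esym/IU.
  - by constructor 2; apply/esym/IU; rewrite -mA.
case=> ->.
- by exists (Posz 0).
- by exists (Posz 1); rewrite /= m1r.
- by exists (Posz 2); rewrite /= m1r.
Qed.

Lemma same3 {G : eqType} {mul : G -> G -> G} {one : G} {inv : G -> G}
  (HG : group_axioms mul one inv) (c x : G) (H3 : mul c (mul c c) = one)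
  (Hx : x = c \/ x = inv c) : same_cyc mul one inv x c.
Proof.
have [K1 K2 CL CR IU] := grp_lemmas HG.
case: (HG) => mA m1l m1r mVl mVr.
case: Hx => ->; first by [].
have Ei : inv c = mul c c by apply/esym/IU.
have H3r : forall r, mul c (mul c (mul c r)) = r.
  by move=> r; rewrite mA mA -(mA c c c) H3 m1l.
have H3' : mul (mul c c) (mul (mul c c) (mul c c)) = one.
  by rewrite -!mA H3r.
have E4 : mul (mul c c) (mul c c) = c by rewrite -!mA H3r.
move=> z; rewrite Ei; split.
  move/(cyc3 HG H3'); rewrite E4 => Hz; apply/(cyc3 HG H3).
  by case: Hz => ->; [constructor 1 | constructor 3 | constructor 2].
move/(cyc3 HG H3) => Hz; apply/(cyc3 HG H3'); rewrite E4.
by case: Hz => ->; [constructor 1 | constructor 3 | constructor 2].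
Qed.

Lemma E0 {G : eqType} {mul : G -> G -> G} {one : G} {inv : G -> G}
  (HG : group_axioms mul one inv) (g h : G) :
  mul (gcomm mul inv g h) (mul h g) = mul g h.
Proof.
have [K1 K2 CL CR IU] := grp_lemmas HG.
case: (HG) => mA m1l m1r mVl mVr.
by rewrite /gcomm -!mA K1 mVl m1r.
Qed.

Lemma solve_inv {G : eqType} {mul : G -> G -> G} {one : G} {inv : G -> G}
  (HG : group_axioms mul one inv) (c g a : G) :
  mul c a = g -> mul c g = mul g c -> mul (inv g) a = inv c.
Proof.
have [K1 K2 CL CR IU] := grp_lemmas HG.
case: (HG) => mA m1l m1r mVl mVr.
move=> A C; apply: IU.
have C' : mul c (inv g) = mul (inv g) c.
  apply: (CL g); rewrite K2 mA -C -mA mVr m1r //.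
by rewrite mA C' -mA A mVl.
Qed.

Lemma solve_c {G : eqType} {mul : G -> G -> G} {one : G} {inv : G -> G}
  (HG : group_axioms mul one inv) (c g a : G) :
  a = mul g c -> mul (inv g) a = c.
Proof. by have [K1 K2 CL CR IU] := grp_lemmas HG; move=> ->; rewrite K1. Qed.

Lemma caseC3 {G : eqType} {mul : G -> G -> G} {one : G} {inv : G -> G}
  (HG : group_axioms mul one inv) (g h a b : G)
  (e1 : mul h g = mul a h) (e2 : mul h g = mul g b) (e3 : mul b a = mul g h)
  (e4 : mul a b = mul h a) (e5 : mul h a = mul b g) :
  let c := gcomm mul inv g h in
  mul c (mul c c) = one /\ (mul (inv g) a = c \/ mul (inv g) a = inv c)
    /\ (mul (inv h) b = c \/ mul (inv h) b = inv c).
Proof.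
move=> c.
have [K1 K2 CL CR IU] := grp_lemmas HG.
case: (HG) => mA m1l m1r mVl mVr.
have e0 : mul c (mul h g) = mul g h := E0 HG g h.
clearbody c.
have A : mul c a = g.
  by apply: (CR h); rewrite -mA -e1 e0.
have Hch : mul c h = mul h c.
  by apply: (CR a); rewrite -!mA -e4 (ext1 HG A) -e2 A.
have B : mul c b = h.
  by apply: (CR g); rewrite -mA -e5 (ext_r HG Hch) A.
have Hcg : mul c g = mul g c.
  by apply: (CR b); rewrite -!mA -e2 e0 B.
split.
  apply: (CR (mul g h)); rewrite m1l.
  rewrite -!mA -e3 (ext1 HG B) (ext_r HG Hch) A e0 //.
split; right; [exact: solve_inv HG _ _ _ A Hcg | exact: solve_inv HG _ _ _ B Hch].
Qed.

Lemma ext3 {G : eqType} {mul : G -> G -> G} {one : G} {inv : G -> G}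
  (HG : group_axioms mul one inv) {x y z u v : G} :
  mul x (mul y z) = mul u v -> forall r, mul x (mul y (mul z r)) = mul u (mul v r).
Proof. by case: HG => mA _ _ _ _ E r; rewrite !mA -(mA x y z) E. Qed.

Lemma caseC4 {G : eqType} {mul : G -> G -> G} {one : G} {inv : G -> G}
  (HG : group_axioms mul one inv) (g h a b : G)
  (e1 : mul g h = mul h a) (e2 : mul h g = mul g b) (e3 : mul a b = mul g h)
  (e4 : mul b a = mul h g) (e5 : mul b g = mul a h) :
  let c := gcomm mul inv g h in
  mul c (mul c c) = one /\ (mul (inv g) a = c \/ mul (inv g) a = inv c)
    /\ (mul (inv h) b = c \/ mul (inv h) b = inv c).
Proof.
move=> c.
have [K1 K2 CL CR IU] := grp_lemmas HG.
case: (HG) => mA m1l m1r mVl mVr.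
have e0 : mul c (mul h g) = mul g h := E0 HG g h.
clearbody c.
have e0r := ext3 HG e0.
have Hch : mul c h = mul h c.
  apply: (CR (mul h g)); rewrite -!mA.
  by rewrite e0 e2 e0r (ext_r HG e1) e3 e1.
have A : mul c g = a.
  by apply: (CL h); rewrite -e1 -e0 (ext_r HG Hch).
have B : mul b c = h.
  by apply: (CR g); rewrite -mA A e4.
have Bc : mul c b = h.
  by apply: (CR c); rewrite -mA B Hch.
have Hcg : mul c g = mul g c.
  by apply: (CR b); rewrite -!mA -e2 e0 Bc.
split.
  apply: (CR (mul h g)); rewrite m1l -!mA e0.
  by rewrite (ext1 HG A) -e5 (ext1 HG Bc).
split; [left | right].
  by apply: solve_c HG _ _ _ _; rewrite -A Hcg.
exact: solve_inv HG _ _ _ Bc Hch.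
Qed.

Lemma caseC5 {G : eqType} {mul : G -> G -> G} {one : G} {inv : G -> G}
  (HG : group_axioms mul one inv) (g h a b : G)
  (e1 : mul g h = mul b g) (e2 : mul b g = mul a b) (e3 : mul h a = mul g b)
  (e4 : mul h g = mul b a) (e5 : mul b a = mul a h) :
  let c := gcomm mul inv g h in
  mul c (mul c c) = one /\ (mul (inv g) a = c \/ mul (inv g) a = inv c)
    /\ (mul (inv h) b = c \/ mul (inv h) b = inv c).
Proof.
move=> c.
have [K1 K2 CL CR IU] := grp_lemmas HG.
case: (HG) => mA m1l m1r mVl mVr.
have e0 : mul c (mul h g) = mul g h := E0 HG g h.
clearbody c.
have Bc : mul c h = b.
  by apply: (CR g); rewrite -mA e0 e1.
have A : mul c a = g.
  by apply: (CR h); rewrite -mA -e5 -e4 e0.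
have Hcg : mul c g = mul g c.
  by apply: (CR h); rewrite -!mA Bc e1 e2 (ext1 HG A).
have Hch : mul c h = mul h c.
  by apply: (CR a); rewrite -!mA (ext1 HG Bc) -e4 A.
split.
  apply: (CR (mul h g)); rewrite m1l -!mA e0.
  by rewrite (ext_r HG Hcg) Bc -e3 (ext_r HG Hch) A.
split; [right | left].
  exact: solve_inv HG _ _ _ A Hcg.
by apply: solve_c HG _ _ _ _; rewrite -Bc Hch.
Qed.

Lemma caseC6 {G : eqType} {mul : G -> G -> G} {one : G} {inv : G -> G}
  (HG : group_axioms mul one inv) (g h a b : G)
  (e1 : mul g h = mul b g) (e2 : mul b g = mul h a) (e3 : mul a b = mul h g)
  (e4 : mul b a = mul g b) (e5 : mul g b = mul a h) :
  let c := gcomm mul inv g h in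
  mul c (mul c c) = one /\ (mul (inv g) a = c \/ mul (inv g) a = inv c)
    /\ (mul (inv h) b = c \/ mul (inv h) b = inv c).
Proof.
move=> c.
have [K1 K2 CL CR IU] := grp_lemmas HG.
case: (HG) => mA m1l m1r mVl mVr.
have e0 : mul c (mul h g) = mul g h := E0 HG g h.
clearbody c.
have e0r := ext3 HG e0.
have Bc : mul c h = b.
  by apply: (CR g); rewrite -mA e0 e1.
have A : mul g c = a.
  by apply: (CR h); rewrite -mA Bc e5.
have Hch : mul h c = mul c h.
  by apply: (CL g); rewrite Bc -e4 -A -Bc -!mA e0r.
have Hcg : mul c g = mul g c.
  by apply: (CL h); rewrite (ext_r HG Hch) e0 e1 e2 -A.
split.
  apply: (CR (mul h g)); rewrite m1l -!mA e0.
  by rewrite !(ext_r HG Hcg) Bc -e3 -A -mA.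
split; left.
  by apply: solve_c HG _ _ _ _; rewrite A.
by apply: solve_c HG _ _ _ _; rewrite -Bc Hch.
Qed.

Theorem lemma3p7 (R : comNzRingType) (G : eqType)
  (mul : G -> G -> G) (one : G) (inv : G -> G) (phi : G -> G)
  (HG : group_axioms mul one inv) (Hphi : is_involution mul phi)
  (Hchar : 3%N \in [pchar R])
  (Hcomm : skew_commutative R mul phi)
  (g h : G) (Hg : phi g <> g) (Hh : phi h <> h) (Hgh : mul g h <> mul h g)
  (Hcond :
     (phi (mul g h) = mul g h /\ mul h g = mul (phi g) h /\ mul (phi g) h = mul g (phi h))
  \/ (mul g h = mul h (phi g) /\ mul h (phi g) = mul (phi g) (phi h)
      /\ mul (phi h) g = mul (phi g) h)
  \/ (mul g h = mul (phi h) g /\ mul (phi h) g = mul (phi g) (phi h)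
      /\ mul h (phi g) = mul g (phi h))
  \/ (phi (mul h g) = mul h g /\ mul g h = mul (phi h) g /\ mul (phi h) g = mul h (phi g))) :
  same_cyc mul one inv (mul (inv g) (phi g)) (gcomm mul inv g h) /\
  same_cyc mul one inv (mul (inv h) (phi h)) (gcomm mul inv g h) /\
  (let c := gcomm mul inv g h in mul c (mul c c) = one).
Proof.
case: (Hphi) => Hanti Hinv.
have SK := skew_eq R G mul phi Hinv Hchar Hcomm g h.
suff : let c := gcomm mul inv g h in
  mul c (mul c c) = one /\ (mul (inv g) (phi g) = c \/ mul (inv g) (phi g) = inv c)
    /\ (mul (inv h) (phi h) = c \/ mul (inv h) (phi h) = inv c).
  move=> /= [H3 [Hx Hy]].
  by split; [exact: same3 HG _ _ H3 Hx | split; [exact: same3 HG _ _ H3 Hy | exact: H3]].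
case: Hcond => [[H1 [H2 H3]]|[[H1 [H2 H3]]|[[H1 [H2 H3]]|[H1 [H2 H3]]]]].
- rewrite Hanti in H1.
  have [E4 E5] : mul h (phi g) = mul (phi g) (phi h) /\ mul (phi h) g = mul (phi g) (phi h).
  { move: (SK (mul (phi g) (phi h))); rewrite -H3 -H2 H1 eqxx.
    case: (mul h (phi g) =P mul (phi g) (phi h)) => [Ea|_];
    case: (mul (phi h) g =P mul (phi g) (phi h)) => [Eb|_]; first by split.
    all: by case: (mul g h == mul (phi g) (phi h)); case: (mul h g == mul (phi g) (phi h)). }
  apply: (caseC3 HG) => //; first by rewrite H2.
  by rewrite E4.
- have [E4 E5] : mul (phi h) (phi g) = mul h g /\ mul g (phi h) = mul h g.
  { move: (SK (mul h g)); rewrite -H2 -H1 H3 eqxx.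
    case: (mul (phi h) (phi g) =P mul h g) => [Ea|_];
    case: (mul g (phi h) =P mul h g) => [Eb|_]; first by split.
    all: by case: (mul g h == mul h g); case: (mul (phi g) h == mul h g). }
  by apply: (caseC4 HG) => //; rewrite -H2 -H1.
- have [E4 E5] : mul (phi h) (phi g) = mul h g /\ mul (phi g) h = mul h g.
  { move: (SK (mul h g)); rewrite -H2 -H1 -H3 eqxx.
    case: (mul (phi h) (phi g) =P mul h g) => [Ea|_];
    case: (mul (phi g) h =P mul h g) => [Eb|_]; first by split.
    all: by case: (mul g h == mul h g); case: (mul h (phi g) == mul h g). }
  by apply: (caseC5 HG) => //; rewrite E4 E5.
- rewrite Hanti in H1.
  have [E4 E5] : mul g (phi h) = mul (phi h) (phi g) /\ mul (phi g) h = mul (phi h) (phi g).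
  { move: (SK (mul (phi h) (phi g))); rewrite H1 -H3 -H2 eqxx.
    case: (mul g (phi h) =P mul (phi h) (phi g)) => [Ea|_];
    case: (mul (phi g) h =P mul (phi h) (phi g)) => [Eb|_]; first by split.
    all: by case: (mul g h == mul (phi h) (phi g)); case: (mul h g == mul (phi h) (phi g)). }
  by apply: (caseC6 HG) => //; rewrite E4 E5.
Qed.
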